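(* Let $n,m,l$ be positive integers, $f:\mathbb{R}^n\times\mathbb{R}^m\to\mathbb{R}^n$ smooth with $f(0,0)=0$, $g_1,\dots,g_l:\mathbb{R}^n\times\mathbb{R}^m\to\mathbb{R}$ smooth with $g_i(0,0)=0$, and let $N_1,\dots,N_l\in\{1,\dots,n\}$ be pairwise distinct. Consider the system $$\dot x=f(x,u)+g_1(x,u)\theta_1e_{N_1}+\dots+g_l(x,u)\theta_le_{N_l},\qquad x\in\mathbb{R}^n,\ u\in\mathbb{R}^m,$$ with $e_1,\dots,e_n$ the standard basis of $\mathbb{R}^n$ and unknown constant $\theta=(\theta_1,\dots,\theta_l)'\in\mathbb{R}^l$, and let $k:\mathbb{R}^l\times\mathbb{R}^n\to\mathbb{R}^m$ be smooth with $k(\vartheta,0)=0$ for all $\vartheta$. Suppose that for every $\theta,\hat\theta_1,\dots,\hat\theta_l\in\mathbb{R}^l$ the sets $I_1,\dots,I_l$ produced by the algorithm in the context satisfy $I_1\cup\dots\cup I_l=\{1,\dots,l\}$. Then the following holds (with $N=l$ and $g(x,u)$ the $n\times l$ matrix whose $p$-th column is $g_p(x,u)e_{N_p}$): if there exist times $0=\tau_0<\tau_1<\dots<\tau_l$, vectors $\theta,d_0,\dots,d_l\in\mathbb{R}^l$ with $d_i\ne0$ for $i=0,\dots,l$, and a right differentiable $x\in C^0([0,\tau_l];\mathbb{R}^n)\cap C^1([0,\tau_l]\setminus\{\tau_0,\dots,\tau_l\};\mathbb{R}^n)$ satisfying $\dot x(t)=f(x(t),k(\theta+d_i,x(t)))+g(x(t),k(\theta+d_i,x(t)))\theta$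 for $t\in[\tau_i,\tau_{i+1})$, $i=0,\dots,l-1$, and $g(x(t),k(\theta+d_j,x(t)))d_{i+1}=0$ for all $t\in[\tau_j,\tau_{j+1}]$, $i=0,\dots,l-1$, $j=0,\dots,i$, then $x(t)=0$ for all $t\in[0,\tau_l]$.
   Context: Algorithm: given $\theta,\hat\theta_1,\dots,\hat\theta_l\in\mathbb{R}^l$, for $z\in\mathbb{R}^l$ define the vector field $F_z(x)=f(x,k(z,x))+\sum_{i=1}^lg_i(x,k(z,x))\theta_ie_{N_i}$. For a given $z$, say index $i\in\{1,\dots,l\}$ satisfies the implication ( * ) if: whenever $x\in\mathbb{R}^n$ satisfies $h_i(x)=0$ and $L_{F_z}^{(j)}h_i(x)=0$ for all $j=1,2,\dots$, where $h_i(x):=g_i(x,k(z,x))$, then $x=0$. Here $L_Fh=\nabla h\,F$ is the Lie derivative and $L_F^{(j)}h=L_FL_F^{(j-1)}h$, $L_F^{(1)}h=L_Fh$. Step 1: set $z=\hat\theta_1$ and let $I_1$ be the set of indices $i$ satisfying ( * ). Step $s>1$: set $z=\hat\theta_s$, then replace the component $z_i$ by $\theta_i$ for every $i\in I_1\cup\dots\cup I_{s-1}$; let $I_s$ be the set of indices $i$ satisfying ( * ) for this $z$. *)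

(* Defs.v *)
From HB Require Import structures.
From mathcomp Require Import all_boot all_order all_algebra.
From mathcomp Require Import all_classical all_reals all_analysis.
Set Implicit Arguments. Unset Strict Implicit. Unset Printing Implicit Defensive.
Import Order.TTheory GRing.Theory Num.Theory.
Import numFieldNormedType.Exports.
Local Open Scope classical_set_scope.
Local Open Scope ring_scope.

Section Defs.
Variable R : realType.

Fixpoint iter_dd (V W : normedModType R) (f : V -> W) (vs : seq V) : V -> W :=
  match vs with
  | [::] => f
  | v :: vs' => fun x => 'D_v (iter_dd f vs') x
  end.

(* smooth (C^oo): every iterated directional derivative exists and is
   (Frechet) differentiable everywhere; in finite dimension this is C^oo. *)
Definition smooth (V W : normedModType R) (f : V -> W) : Prop :=
  forall (vs : seq V) (x : V), differentiable (iter_dd f vs) x.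

Definition lie (n : nat) (F : 'rV[R]_n -> 'rV[R]_n) (h : 'rV[R]_n -> R)
  : 'rV[R]_n -> R := fun x => 'D_(F x) h x.

Definition lieN (n : nat) (F : 'rV[R]_n -> 'rV[R]_n) (j : nat)
  (h : 'rV[R]_n -> R) : 'rV[R]_n -> R := iter j (lie F) h.

Definition e_ (n : nat) (i : 'I_n) : 'rV[R]_n := delta_mx 0 i.

(* g(x,u) v  where g(x,u) is the n x l matrix whose p-th column is
   g_p(x,u) e_{N_p}; v is a vector of R^l (stored as a row). *)
Definition gmul (n m l : nat) (N : 'I_l -> 'I_n)
  (g : 'I_l -> 'rV[R]_n -> 'rV[R]_m -> R) (x : 'rV[R]_n) (u : 'rV[R]_m)
  (v : 'rV[R]_l) : 'rV[R]_n :=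
  \sum_(p < l) (g p x u * v 0 p) *: e_ (N p).

Definition Fz (n m l : nat) (N : 'I_l -> 'I_n)
  (f : 'rV[R]_n -> 'rV[R]_m -> 'rV[R]_n)
  (g : 'I_l -> 'rV[R]_n -> 'rV[R]_m -> R)
  (k : 'rV[R]_l -> 'rV[R]_n -> 'rV[R]_m) (theta z : 'rV[R]_l)
  : 'rV[R]_n -> 'rV[R]_n :=
  fun x => f x (k z x) + gmul N g x (k z x) theta.

Definition star (n m l : nat) (N : 'I_l -> 'I_n)
  (f : 'rV[R]_n -> 'rV[R]_m -> 'rV[R]_n)
  (g : 'I_l -> 'rV[R]_n -> 'rV[R]_m -> R)
  (k : 'rV[R]_l -> 'rV[R]_n -> 'rV[R]_m) (theta z : 'rV[R]_l) (i : 'I_l)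
  : Prop :=
  let h := fun x => g i x (k z x) in
  forall x : 'rV[R]_n,
    h x = 0 ->
    (forall j : nat, (0 < j)%N -> lieN (Fz N f g k theta z) j h x = 0) ->
    x = 0.

Definition zrepl (l : nat) (J : set 'I_l) (thh theta : 'rV[R]_l) : 'rV[R]_l :=
  \row_i (if `[< J i >] then theta 0 i else thh 0 i).

(* cumI s = I_1 ∪ ... ∪ I_s  produced by the algorithm, where the hat-theta
   of step s is thh s.-1 (i.e. thh 0 = hat theta_1, ...). *)
Fixpoint cumI (n m l : nat) (N : 'I_l -> 'I_n)
  (f : 'rV[R]_n -> 'rV[R]_m -> 'rV[R]_n)
  (g : 'I_l -> 'rV[R]_n -> 'rV[R]_m -> R)
  (k : 'rV[R]_l -> 'rV[R]_n -> 'rV[R]_m) (theta : 'rV[R]_l)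
  (thh : nat -> 'rV[R]_l) (s : nat) : set 'I_l :=
  match s with
  | 0 => set0
  | s'.+1 =>
      let J := cumI N f g k theta thh s' in
      J `|` [set i | star N f g k theta (zrepl J (thh s') theta) i]
  end.

Definition right_deriv (n : nat) (x : R -> 'rV[R]_n) (t : R) (v : 'rV[R]_n)
  : Prop :=
  (fun h : R => h^-1 *: (x (h + t) - x t)) @ 0^'+ --> v.

Definition right_derivable (n : nat) (x : R -> 'rV[R]_n) (t : R) : Prop :=
  exists v, right_deriv x t v.

End Defs.

(* Main.v *)
Require Import Defs.
From HB Require Import structures.
From mathcomp Require Import all_boot all_order all_algebra.
From mathcomp Require Import all_classical all_reals all_analysis.
Set Implicit Arguments. Unset Strict Implicit. Unset Printing Implicit Defensive.
Import Order.TTheory GRing.Theory Num.Theory.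
Import numFieldNormedType.Exports.
Local Open Scope classical_set_scope.
Local Open Scope ring_scope.
From mathcomp Require Import ring lra zify.

Section Sm.
Variable R : realType.
Variable V : normedModType R.

Definition Smk (k : nat) (h : V -> R) :=
  forall vs : seq V, (size vs <= k)%N -> forall x, differentiable (iter_dd h vs) x.

Lemma iter_dd_rcons (h : V -> R) vs v :
  iter_dd h (rcons vs v) = iter_dd ('D_v h) vs.
Proof. by elim: vs => [//|w vs IH] /=; rewrite IH. Qed.

Lemma Smk0 h : Smk 0 h <-> forall x, differentiable h x.
Proof.
split=> [H x|H [|//] _ x]; first exact: (H [::]).
exact: H.
Qed.

Lemma SmkS k h : Smk k.+1 h <-> (forall x, differentiable h x) /\ forall v, Smk k ('D_v h).
Proof.
split=> [H|[H1 H2]].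
  split; first exact: (H [::]).
  move=> v vs svs x; rewrite -iter_dd_rcons; apply: H.
  by rewrite size_rcons.
case/lastP=> [|vs v] svs x; first exact: H1.
rewrite iter_dd_rcons; apply: H2.
by move: svs; rewrite size_rcons.
Qed.

Lemma SmE h : smooth h <-> forall k, Smk k h.
Proof.
split=> [H k vs _ x|H vs x]; first exact: H.
exact: (H (size vs)).
Qed.

Lemma Smk_diff k h : Smk k h -> forall x, differentiable h x.
Proof. by move=> H x; apply: (H [::]). Qed.

Lemma Smk_ext k f g : f =1 g -> Smk k f -> Smk k g.
Proof. by move=> /funext ->. Qed.

Lemma derive_exact_cvg (W : normedModType R) (f : V -> W) a v c :
  (forall h : R, f (h *: v + a) - f a = h *: c) ->
  (fun h : R => h^-1 *: ((f \o shift a) (h *: v) - f a)) @ 0^' --> c.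
Proof.
move=> H.
apply/cvgrPdist_le => e e0.
near=> h.
rewrite /= H scalerA mulVf ?scale1r ?subrr ?normr0 ?ltW //.
near: h. exact: nbhs_dnbhs_neq.
Unshelve. all: by end_near.
Qed.

Lemma derive_exact (W : normedModType R) (f : V -> W) a v c :
  (forall h : R, f (h *: v + a) - f a = h *: c) -> derivable f a v /\ 'D_v f a = c.
Proof.
move=> /derive_exact_cvg E.
split; [apply/cvg_ex; exists c; exact: E|idtac].
exact: cvg_lim E.
Qed.

Lemma Smk_cst k (c : R) : Smk k (fun _ => c).
Proof.
elim: k c => [|k IH] c.
  by apply/Smk0 => x; exact: differentiable_cst.
apply/SmkS; split=> [x|v]; first exact: differentiable_cst.
apply: (Smk_ext (f := fun _ => 0)) (IH 0) => x.
by rewrite derive_cst.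
Qed.

Lemma Smk_add k f g : Smk k f -> Smk k g -> Smk k (fun x => f x + g x).
Proof.
elim: k f g => [|k IH] f g.
  move=> /Smk0 Hf /Smk0 Hg; apply/Smk0 => x.
  exact: (differentiableD (Hf x) (Hg x)).
move=> /SmkS [Hf Hf'] /SmkS [Hg Hg']; apply/SmkS; split.
  by move=> x; exact: (differentiableD (Hf x) (Hg x)).
move=> v; apply: (Smk_ext (f := fun x => 'D_v f x + 'D_v g x)); last exact: IH.
move=> x /=.
by rewrite -deriveD //; exact: diff_derivable.
Qed.

Lemma Smk_mul k f g : Smk k f -> Smk k g -> Smk k (fun x => f x * g x).
Proof.
elim: k f g => [|k IH] f g.
  move=> /Smk0 Hf /Smk0 Hg; apply/Smk0 => x.
  exact: (differentiableM (Hf x) (Hg x)).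
move=> Sf Sg; have Sf0 := Sf; have Sg0 := Sg.
move: Sf Sg => /SmkS [Hf Hf'] /SmkS [Hg Hg']; apply/SmkS; split.
  by move=> x; exact: (differentiableM (Hf x) (Hg x)).
have Sfk : Smk k f by move=> vs svs; apply: Sf0; exact: leqW.
have Sgk : Smk k g by move=> vs svs; apply: Sg0; exact: leqW.
move=> v; apply: (Smk_ext (f := fun x => f x * 'D_v g x + g x * 'D_v f x)).
  move=> x /=.
  rewrite -[RHS]/('D_v (f * g) x).
  by rewrite (deriveM (diff_derivable (v:=v) (Hf x)) (diff_derivable (v:=v) (Hg x))).
by apply: Smk_add; apply: IH.
Qed.

Lemma Smk_sum k (I : finType) (F : I -> V -> R) :
  (forall i, Smk k (F i)) -> Smk k (fun x => \sum_(i : I) F i x).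
Proof.
move=> H.
suff: forall s : seq I, Smk k (fun x => \sum_(i <- s) F i x) by apply.
elim=> [|i s IH].
  by apply: (Smk_ext (f := fun _ => 0)); [move=> x; rewrite big_nil|exact: Smk_cst].
apply: (Smk_ext (f := fun x => F i x + \sum_(j <- s) F j x)).
  by move=> x; rewrite big_cons.
exact: Smk_add.
Qed.

Definition Sm h := forall k, Smk k h.

Lemma Sm_D h v : Sm h -> Sm ('D_v h).
Proof. by move=> H k; have /SmkS [] := H k.+1. Qed.

Lemma Sm_diff h : Sm h -> forall x, differentiable h x.
Proof. by move=> H; apply: (Smk_diff (H 0%N)). Qed.


End Sm.

Section Comp.
Variable R : realType.
Variables V W : normedModType R.

Lemma Sm_comp (I : finType) (G : W -> R) (Phi : V -> W)
  (phi : I -> V -> R) (b : I -> W) :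
  (forall x, differentiable Phi x) ->
  (forall v x, 'D_v Phi x = \sum_(i : I) 'D_v (phi i) x *: b i) ->
  (forall i, Sm (phi i)) -> Sm G -> Sm (fun x => G (Phi x)).
Proof.
move=> dP DP Sp SG k; elim: k G SG => [|k IH] G SG.
  apply/Smk0 => x; exact: (differentiable_comp (dP x) (Sm_diff SG (Phi x))).
apply/SmkS; split.
  move=> x; exact: (differentiable_comp (dP x) (Sm_diff SG (Phi x))).
move=> v.
apply: (Smk_ext (f := fun x => \sum_(i : I) 'D_v (phi i) x * 'D_(b i) G (Phi x))).
  move=> x /=.
  have dGP := differentiable_comp (dP x) (Sm_diff SG (Phi x)).
  rewrite -[(fun x => G (Phi x))]/(G \o Phi) (deriveE _ dGP) diff_comp //;
    last exact: Sm_diff.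
  rewrite /= -(@deriveE _ _ _ Phi x v (dP x)) DP linear_sum; apply: eq_bigr => i _.
  by rewrite linearZ /= -deriveE //; exact: Sm_diff.
apply: Smk_sum => i; apply: Smk_mul; first exact: Sm_D.
exact: (IH _ (Sm_D _ SG)).
Qed.

Lemma Sm_coord (a b : nat) (M : V -> 'M[R]_(a, b)) i j :
  smooth M -> Sm (fun x => M x i j).
Proof.
move=> SM.
have E : forall vs, iter_dd (fun x => M x i j) vs = fun x => iter_dd M vs x i j.
  elim=> [//|v vs IH] /=; rewrite IH; apply: funext => x.
  rewrite (derive_mx (diff_derivable (SM vs x))) mxE //.
move=> k vs _ x; rewrite E.
exact: (differentiable_comp (SM vs x) (differentiable_coord _ i j)).
Qed.

End Comp.

Lemma Sm_rcoord (R : realType) (n : nat) (i : 'I_n) :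
  Sm (fun x : 'rV[R]_n => x 0 i).
Proof.
move=> k; elim: k => [|k IH].
  apply/Smk0 => x; exact: differentiable_coord.
apply/SmkS; split => [x|v]; first exact: differentiable_coord.
apply: (Smk_ext (f := fun _ => v 0 i)); last exact: Smk_cst.
move=> x; have [] // := derive_exact (f := fun x : 'rV[R]_n => x 0 i) (a := x) (v := v) (c := v 0 i).
by move=> h; rewrite !mxE addrK.
Qed.

Lemma fst_sum (R : realType) (V W : normedModType R) (I : finType) (F : I -> V * W) :
  (\sum_(i : I) F i).1 = \sum_(i : I) (F i).1.
Proof. by elim/big_rec2: _ => //= i a b _ <-. Qed.

Lemma snd_sum (R : realType) (V W : normedModType R) (I : finType) (F : I -> V * W) :
  (\sum_(i : I) F i).2 = \sum_(i : I) (F i).2.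
Proof. by elim/big_rec2: _ => //= i a b _ <-. Qed.

Lemma fstD (R : realType) (V W : normedModType R) (p q : V * W) : (p + q).1 = p.1 + q.1.
Proof. by []. Qed.
Lemma sndD (R : realType) (V W : normedModType R) (p q : V * W) : (p + q).2 = p.2 + q.2.
Proof. by []. Qed.
Lemma fstZ (R : realType) (V W : normedModType R) (a : R) (p : V * W) : (a *: p).1 = a *: p.1.
Proof. by []. Qed.
Lemma sndZ (R : realType) (V W : normedModType R) (a : R) (p : V * W) : (a *: p).2 = a *: p.2.
Proof. by []. Qed.

Lemma diff_idf (R : realType) (V : normedModType R) (x : V) :
  differentiable (fun y : V => y) x.
Proof. exact: ex_diff. Qed.

Lemma derive_pairE (R : realType) (U V W : normedModType R) (f1 : U -> V) (f2 : U -> W) x v :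
  differentiable f1 x -> differentiable f2 x ->
  'D_v (fun y => (f1 y, f2 y)) x = ('D_v f1 x, 'D_v f2 x).
Proof.
move=> d1 d2; rewrite deriveE; last exact: differentiable_pair.
by rewrite diff_pair // -!deriveE.
Qed.

Lemma derive_rcoord (R : realType) n (i : 'I_n) (x v : 'rV[R]_n) :
  'D_v (fun y : 'rV[R]_n => y 0 i) x = v 0 i.
Proof.
have [] // := derive_exact (f := fun x : 'rV[R]_n => x 0 i) (a := x) (v := v) (c := v 0 i).
by move=> h; rewrite !mxE addrK.
Qed.

Section Sys.
Variables (R : realType) (n m l : nat).
Variables (f : 'rV[R]_n -> 'rV[R]_m -> 'rV[R]_n)
  (g : 'I_l -> 'rV[R]_n -> 'rV[R]_m -> R) (N : 'I_l -> 'I_n)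
  (k : 'rV[R]_l -> 'rV[R]_n -> 'rV[R]_m).
Hypotheses (Sf : smooth (fun p : 'rV[R]_n * 'rV[R]_m => f p.1 p.2))
  (Sg : forall i, smooth (fun p : 'rV[R]_n * 'rV[R]_m => g i p.1 p.2))
  (Sk : smooth (fun p : 'rV[R]_l * 'rV[R]_n => k p.1 p.2)).

Lemma diff_kz z x : differentiable (fun y => k z y) x.
Proof.
have d1 : differentiable (fun y : 'rV[R]_n => (z, y)) x.
  by apply: differentiable_pair; [exact: differentiable_cst|exact: diff_idf].
exact: (differentiable_comp d1 (Sk [::] (z, x))).
Qed.

Lemma Sm_kc z j : Sm (fun x => k z x 0 j).
Proof.
apply: (@Sm_comp R _ _ 'I_n (fun p : 'rV[R]_l * 'rV[R]_n => k p.1 p.2 0 j)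
  (fun x => (z, x)) (fun i x => x 0 i) (fun i => (0, e_ R i))).
- move=> x; apply: differentiable_pair; [exact: differentiable_cst|exact: diff_idf].
- move=> v x.
  have [_ ->] : derivable (fun x : 'rV[R]_n => (z, x)) x v /\
        'D_v (fun x : 'rV[R]_n => (z, x)) x = (0, v).
    apply: derive_exact => h /=.
    rewrite /add_pair /pair_opp /= -[h *: (0, v)]/(h *: 0, h *: v).
    rewrite scaler0 -[(z, h *: v + x) - (z, x)]/(z - z, h *: v + x - x).
    by rewrite subrr addrK.
  rewrite [RHS]surjective_pairing fst_sum snd_sum /=.
  congr (_, _).
    by rewrite big1 // => i _; rewrite scaler0.
  rewrite [LHS]row_sum_delta; apply: eq_bigr => i _.
  by rewrite derive_rcoord.
- move=> i; exact: Sm_rcoord.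
- exact: (Sm_coord (M := fun p : 'rV[R]_l * 'rV[R]_n => k p.1 p.2)).
Qed.

Definition bPhi (s : 'I_n + 'I_m) : 'rV[R]_n * 'rV[R]_m :=
  match s with inl i => (e_ R i, 0) | inr j => (0, e_ R j) end.
Definition pPhi z (s : 'I_n + 'I_m) : 'rV[R]_n -> R :=
  match s with inl i => fun x => x 0 i | inr j => fun x => k z x 0 j end.

Lemma Sm_Phi z (G : 'rV[R]_n * 'rV[R]_m -> R) : Sm G -> Sm (fun x => G (x, k z x)).
Proof.
move=> SG.
apply: (@Sm_comp R _ _ _ G (fun x => (x, k z x)) (pPhi z) bPhi) => //.
- move=> x; apply: differentiable_pair; [exact: diff_idf|exact: diff_kz].
- move=> v x.
  rewrite derive_pairE; [|exact: diff_idf|exact: diff_kz].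
  rewrite (derive_mx (diff_derivable (diff_kz z x))).
  rewrite big_sumType /=.
  rewrite [RHS]surjective_pairing fstD sndD !fst_sum !snd_sum /=.
  rewrite derive_id; congr (_, _).
    rewrite [X in _ = _ + X]big1 ?addr0; last by move=> *; rewrite scaler0.
    rewrite [LHS]row_sum_delta; apply: eq_bigr => i _.
    by rewrite derive_rcoord.
  rewrite [X in _ = X + _]big1 ?add0r; last by move=> *; rewrite scaler0.
  rewrite [LHS]row_sum_delta; apply: eq_bigr => i _.
  by rewrite mxE.
- by case=> [i|j] /=; [exact: Sm_rcoord|exact: Sm_kc].
Qed.

Lemma Sm_h z p : Sm (fun x => g p x (k z x)).
Proof. exact: (Sm_Phi z ((SmE _).1 (Sg p))). Qed.

Lemma Sm_fc z i : Sm (fun x => f x (k z x) 0 i).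
Proof. exact: (Sm_Phi z (Sm_coord 0 i Sf)). Qed.

Lemma Sm_Fc th z i : Sm (fun x => Fz N f g k th z x 0 i).
Proof.
move=> kk; apply: (Smk_ext (f := fun x => f x (k z x) 0 i +
   \sum_(p : 'I_l) (g p x (k z x) * th 0 p) * e_ R (N p) 0 i)).
  move=> x; rewrite /Fz /gmul !mxE summxE; congr (_ + _); apply: eq_bigr => p _; rewrite [RHS]mxE //.
apply: Smk_add; first exact: Sm_fc.
apply: Smk_sum => p; apply: Smk_mul; last exact: Smk_cst.
apply: Smk_mul; [exact: Sm_h|exact: Smk_cst].
Qed.

Lemma Sm_lie th z h : Sm h -> Sm (lie (Fz N f g k th z) h).
Proof.
move=> Sh kk.
apply: (Smk_ext (f := fun x => \sum_(i < n) Fz N f g k th z x 0 i * 'D_(e_ R i) h x)).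
  move=> x; rewrite /lie (deriveE _ (Sm_diff Sh x)).
  rewrite [X in _ = 'd h x X]row_sum_delta linear_sum; apply: eq_bigr => i _.
  by rewrite linearZ /= -deriveE //; exact: Sm_diff.
apply: Smk_sum => i; apply: Smk_mul; [exact: Sm_Fc|exact: Sm_D].
Qed.

Lemma Sm_lieN th z h j : Sm h -> Sm (lieN (Fz N f g k th z) j h).
Proof.
move=> Sh; elim: j => [//|j IH].
by rewrite /lieN iterS; apply: Sm_lie.
Qed.

Lemma diff_Fz th z x : differentiable (Fz N f g k th z) x.
Proof.
have -> : Fz N f g k th z = \sum_(i < n) (fun y => Fz N f g k th z y 0 i *: e_ R i).
  rewrite fct_sumE; apply: funext => y; exact: row_sum_delta.
apply: differentiable_sum => i; apply: differentiableZl.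
exact: Sm_diff (Sm_Fc th z i) x.
Qed.

End Sys.

Section Dyn.
Variable R : realType.

Lemma deriv_right n (x : R -> 'rV[R]_n) t w :
  derivable x t 1 -> right_deriv x t w -> 'D_1 x t = w.
Proof.
move=> dx rd.
have E : (fun h : R => h^-1 *: ((x \o shift t) (h *: 1) - x t)) =
         (fun h : R => h^-1 *: (x (h + t) - x t)).
  by apply: funext => h /=; rewrite [h *: 1]mulr1.
rewrite /derive E.
move: dx; rewrite /derivable E => dx.
rewrite (cvg_at_rightE _ _ dx).
exact: cvg_lim rd.
Qed.

Lemma vanish_step n (x : R -> 'rV[R]_n) (F : 'rV[R]_n -> 'rV[R]_n) (H : 'rV[R]_n -> R) a b :
  (forall y, differentiable H y) ->
  (forall s, s \in `]a, b[ -> derivable x s 1 /\ 'D_1 x s = F (x s)) ->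
  (forall s, s \in `]a, b[ -> H (x s) = 0) ->
  forall s, s \in `]a, b[ -> lie F H (x s) = 0.
Proof.
move=> dH dx Hz s sab.
have [dxs Dxs] := dx s sab.
have dxs' : differentiable x s by apply/derivable1_diffP.
rewrite /lie deriveE // -Dxs deriveE // -[X in _ = X](derive_cst (0 : R) s 1).
rewrite -[LHS]/(('d H (x s) \o 'd x s) 1).
rewrite -diff_comp // -deriveE; last exact: differentiable_comp.
apply: near_eq_derive; near=> u.
rewrite /= Hz //.
near: u; exact: near_in_itvoo.
Unshelve. all: by end_near.
Qed.

End Dyn.

Section Propag.
Variable R : realType.

Definition locP (P : R -> Prop) (a b : R) :=
  forall s, a <= s <= b -> P s ->
    exists2 e : R, 0 < e & forall t, a <= t <= b -> `|t - s| < e -> P t.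

Lemma propagate_fwd (P : R -> Prop) a b :
  locP P a b -> locP (fun t => ~ P t) a b ->
  forall s0, a <= s0 <= b -> P s0 -> forall t, s0 <= t <= b -> P t.
Proof.
move=> lP lN s0 /andP[as0 s0b] Ps0 t1 /andP[s0t1 t1b].
apply: contrapT => Nt1.
have at1 : a <= t1 by apply: le_trans s0t1.
pose A := [set u | s0 <= u <= t1 /\ forall w, s0 <= w <= u -> P w].
have A0 : A s0.
  split; first by rewrite lexx.
  by move=> w /andP[h1 h2]; have -> : w = s0 by apply/eqP; rewrite eq_le h1 h2.
have hsA : has_sup A.
  split; first by exists s0.
  by exists t1 => u [/andP[_ ?] _].
set u := sup A.
have s0u : s0 <= u by apply: sup_upper_bound.
have ut1 : u <= t1 by apply: ge_sup; [exists s0|move=> y [/andP[_ ?] _]].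
have C1 : forall w, s0 <= w < u -> P w.
  move=> w /andP[s0w wu].
  have e0' : 0 < u - w by rewrite subr_gt0.
  have [y [/andP[_ _] Py] hy] := sup_adherent e0' hsA.
  apply: Py; rewrite s0w /=.
  by move: hy; rewrite opprB addrC subrK => /ltW.
have au : a <= u by apply: le_trans s0u.
have ub : u <= b by apply: le_trans t1b.
have Pu : P u.
  apply: contrapT => Nu.
  have [e e0 He] := lN u (introT andP (conj au ub)) Nu.
  have [us0|us0] := eqVneq u s0; first by apply: Nu; rewrite us0.
  have s0u' : s0 < u by rewrite lt_neqAle eq_sym us0 s0u.
  pose w := Num.max s0 (u - e / 2).
  have wu : w < u.
    by rewrite /w gt_max s0u' /= ltrBlDr ltrDl divr_gt0.
  have s0w : s0 <= w by rewrite /w le_max lexx.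
  apply: (He w).
  - by rewrite (le_trans as0 s0w) (le_trans (ltW wu) ub).
  - rewrite ltr0_norm ?subr_lt0 // opprB ltrBlDr.
    rewrite -ltrBlDl /w.
    have : u - e / 2 <= w by rewrite /w le_max lexx orbT.
    move=> h; apply: lt_le_trans h; rewrite ltrD2l ltrN2.
    by rewrite ltr_pdivrMr // ltr_pMr // ltr1n.
  - by apply: C1; rewrite s0w wu.
have [e e0 He] := lP u (introT andP (conj au ub)) Pu.
have [ut1'|ut1'] := eqVneq u t1; first by apply: Nt1; rewrite -ut1'.
have ult1 : u < t1 by rewrite lt_neqAle ut1' ut1.
pose w := Num.min t1 (u + e / 2).
have uw : u < w by rewrite /w lt_min ult1 ltrDl divr_gt0.
have Aw : A w.
  split; first by rewrite (le_trans s0u (ltW uw)) /w ge_min lexx.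
  move=> y /andP[s0y yw].
  have [yu|uy] := ltP y u; first by apply: C1; rewrite s0y yu.
  apply: (He y).
  - rewrite (le_trans au uy) /=; apply: (le_trans yw); rewrite /w.
    by rewrite ge_min (le_trans _ t1b) ?lexx.
  - rewrite ger0_norm ?subr_ge0 // ltrBlDl.
    apply: (le_lt_trans yw); rewrite /w.
    have h : Num.min t1 (u + e / 2) <= u + e / 2 by rewrite ge_min lexx orbT.
    apply: (le_lt_trans h).
    by rewrite ltrD2l ltr_pdivrMr // ltr_pMr // ltr1n.
have := sup_upper_bound hsA Aw.
by rewrite -/u leNgt uw.
Qed.

Lemma locP_opp (P : R -> Prop) a b : locP P a b -> locP (fun t => P (- t)) (- b) (- a).
Proof.
move=> lP s /andP[h1 h2] Ps.
have hs : a <= - s <= b by rewrite lerNr h2 lerNl h1.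
have [e e0 He] := lP (- s) hs Ps.
exists e => // t /andP[t1 t2] ts; apply: He.
  by rewrite lerNr t2 lerNl t1.
by rewrite -opprD normrN.
Qed.

Lemma propagate (P : R -> Prop) a b :
  locP P a b -> locP (fun t => ~ P t) a b ->
  forall s0, a <= s0 <= b -> P s0 -> forall t, a <= t <= b -> P t.
Proof.
move=> lP lN s0 hs0 Ps0 t /andP[hat htb].
have [s0t|ts0] := leP s0 t; first by apply: (propagate_fwd lP lN hs0 Ps0); rewrite s0t.
have := propagate_fwd (locP_opp lP) (locP_opp lN) (s0 := - s0) _ _ (t := - t).
rewrite !opprK; apply.
- by move/andP: hs0 => [h1 h2]; rewrite lerN2 h2 lerN2 h1.
- by [].
- by rewrite lerN2 (ltW ts0) lerN2.
Qed.

End Propag.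

Section Uniq.
Variable R : realType.

Lemma mxnorm_le n (A : 'rV[R]_n) (c : R) : 0 <= c -> (forall i, `|A 0 i| <= c) -> `|A| <= c.
Proof.
move=> c0 H; rewrite [leLHS]/Num.Def.normr /= mx_normrE.
by apply: bigmax_le => // -[i j] _ /=; rewrite (ord1 i).
Qed.

Lemma mxnorm_ge n (A : 'rV[R]_n) i : `|A 0 i| <= `|A|.
Proof.
rewrite [leRHS]/Num.Def.normr /= mx_normrE.
by rewrite (bigD1 (0, i)) //= le_max lexx.
Qed.

Lemma within_eps n (x : R -> 'rV[R]_n) a b :
  {within `[a, b], continuous x} -> forall s, a <= s <= b ->
  forall e : R, 0 < e -> exists2 d : R, 0 < d &
    forall t, a <= t <= b -> `|t - s| < d -> `|x t - x s| < e.
Proof.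
move=> /subspace_continuousP cx s hs e e0.
have := cx s; rewrite /= in_itv /= => /(_ hs) /cvgrPdist_lt /(_ e e0).
rewrite near_withinE => /nbhs_ballP [d /= d0 H].
exists d => // t ht ts.
rewrite distrC; apply: H; last by rewrite /= in_itv /= ht.
by rewrite /ball /= distrC.
Qed.

Variables (n : nat) (x : R -> 'rV[R]_n) (F : 'rV[R]_n -> 'rV[R]_n) (a b : R).
Hypothesis cx : {within `[a, b], continuous x}.
Hypothesis dx : forall u, a < u < b -> derivable x u 1 /\ 'D_1 x u = F (x u).

Lemma comp_mvt u w i : a <= u -> u < w -> w <= b ->
  exists2 xi, u < xi < w & x w 0 i - x u 0 i = F (x xi) 0 i * (w - u).
Proof.
move=> au uw wb.
have := @MVT R (fun t => x t 0 i) (fun t => 'D_1 x t 0 i) u w uw.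
case.
- move=> t; rewrite in_itv /= => /andP[ut tw].
  have [dxt _] := dx (introT andP (conj (le_lt_trans au ut) (lt_le_trans tw wb))).
  apply: DeriveDef; first by move/derivable_mxP: dxt; apply.
  by rewrite (derive_mx dxt) mxE.
- have cxw : {within `[u, w], continuous x}.
    apply: continuous_subspaceW cx => t; rewrite /= !in_itv /= => /andP[h1 h2].
    by rewrite (le_trans au h1) (le_trans h2 wb).
  move=> t; apply: (@continuous_comp _ _ _ (from_subspace `[u, w] x) (fun M : 'rV[R]_n => M 0 i)); first exact: cxw.
  exact: coord_continuous.
- move=> xi; rewrite in_itv /= => /andP[uxi xiw] ->.
  exists xi; first by rewrite uxi xiw.
  have [_ ->] := dx (introT andP (conj (le_lt_trans au uxi) (lt_le_trans xiw wb))).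
  by [].
Qed.


Lemma loc_nonzero : locP (fun t => ~ x t = 0) a b.
Proof.
move=> s hs xs0.
have e0 : 0 < `|x s| by rewrite normr_gt0; apply/eqP.
have [d d0 Hd] := within_eps cx hs e0.
exists d => // t ht hts xt0.
by have := Hd t ht hts; rewrite xt0 sub0r normrN ltxx.
Qed.

Hypothesis Fb : exists2 r : R, 0 < r & exists2 L : R, 0 < L &
  forall y, `|y| < r -> `|F y| <= L * `|y|.

Lemma loc_zero : locP (fun t => x t = 0) a b.
Proof.
move=> s hs xs0.
case: Fb => r r0 [L L0 HF].
have [d d0 Hd] := within_eps cx hs r0.
set e := Num.min d (2 * L)^-1 / 2.
have e0 : 0 < e by rewrite /e divr_gt0 // lt_min d0 invr_gt0 mulr_gt0.
have ed : e < d.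
  have : Num.min d (2 * L)^-1 <= d by rewrite ge_min lexx.
  have : 0 < Num.min d (2 * L)^-1 by rewrite lt_min d0 invr_gt0 mulr_gt0.
  rewrite /e; move=> *; lra.
have eL : L * e <= 4^-1.
  have : Num.min d (2 * L)^-1 <= (2 * L)^-1 by rewrite ge_min lexx orbT.
  rewrite /e => h.
  have -> : (4 : R)^-1 = L * ((2 * L)^-1 / 2).
    by field; rewrite gt_eqF.
  rewrite ler_pM2l // ler_pM2r //.
set c := Num.max a (s - e).
set dd := Num.min b (s + e).
move/andP: hs => [hsa hsb].
have hc1 : a <= c by rewrite le_max lexx.
have hc2 : s - e <= c by rewrite le_max lexx orbT.
have hc3 : c <= s by rewrite ge_max hsa /=; lra.
have hd1 : dd <= b by rewrite ge_min lexx.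
have hd2 : dd <= s + e by rewrite ge_min lexx orbT.
have hd3 : s <= dd by rewrite le_min hsb /=; lra.
have inI : forall t, c <= t <= dd -> [/\ a <= t <= b, `|t - s| < d & `|t - s| <= e].
  move=> t /andP[h1 h2].
  have h3 : `|t - s| <= e by rewrite ler_norml; apply/andP; split; lra.
  split; [apply/andP; split; lra|lra|exact: h3].
have cxI : {within `[c, dd], continuous (fun t => `|x t|)}.
  have cxw : {within `[c, dd], continuous x}.
    apply: continuous_subspaceW cx => t; rewrite /= !in_itv /= => /andP[h1 h2].
    by rewrite (le_trans hc1 h1) (le_trans h2 hd1).
  move=> t; apply: (@continuous_comp _ _ _ (from_subspace `[c, dd] x) (@Num.norm _ _)); first exact: cxw.
  exact: norm_continuous.
have [tM tMI HM] := EVT_max (le_trans hc3 hd3) cxI.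
set M := `|x tM|.
have M0 : 0 <= M by exact: normr_ge0.
have bnd : forall t, c <= t <= dd -> `|x t| <= L * M * e.
  move=> t ht; apply: mxnorm_le; first by apply: mulr_ge0; [apply: mulr_ge0|]; [exact: ltW|exact: M0|exact: ltW].
  move=> i.
  have key : forall xi, c <= xi <= dd -> `|F (x xi) 0 i| <= L * M.
    move=> xi hxi; have [hxi1 hxi2 _] := inI xi hxi.
    have hr : `|x xi| < r by have := Hd xi hxi1 hxi2; rewrite xs0 subr0.
    apply: le_trans (mxnorm_ge _ _) _; apply: le_trans (HF _ hr) _.
    by rewrite ler_pM2l //; apply: HM; rewrite in_itv.
  have [_ _ hte] := inI t ht.
  have [ts|ts|ts] := ltgtP t s; last by rewrite ts xs0 mxE normr0; apply: mulr_ge0; [apply: mulr_ge0|]; [exact: ltW|exact: M0|exact: ltW].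
  - have at' : a <= t by move/andP: ht => [h _]; lra.
    have [xi /andP[h1 h2] E] := comp_mvt i at' ts hsb.
    move: E; rewrite xs0 mxE sub0r => /(congr1 (fun z => `|z|)); rewrite normrN => ->.
    rewrite normrM; apply: ler_pM; rewrite ?normr_ge0 //.
      by apply: key; move/andP: ht => [? ?]; apply/andP; split; lra.
    by move: hte; rewrite distrC [`|s - t|]ger0_norm //; lra.
  - have tb : t <= b by move/andP: ht => [_ h]; lra.
    have [xi /andP[h1 h2] E] := comp_mvt i hsa ts tb.
    move: E; rewrite xs0 mxE subr0 => ->.
    rewrite normrM; apply: ler_pM; rewrite ?normr_ge0 //.
      by apply: key; move/andP: ht => [? ?]; apply/andP; split; lra.
have MM : M <= L * M * e.
  by apply: bnd; move: tMI; rewrite in_itv.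
have M00 : M = 0.
  apply/eqP; rewrite eq_le M0 andbT.
  have : L * M * e = (L * e) * M by rewrite mulrAC.
  move=> h; rewrite h in MM.
  have : L * e * M <= 4^-1 * M by exact: ler_wpM2r.
  lra.
exists e => // t ht hts.
have tI : c <= t <= dd.
  move/andP: ht => [h1 h2]; move: hts; rewrite ltr_norml => /andP[h3 h4].
  by apply/andP; split; [rewrite ge_max h1 /=|rewrite le_min h2 /=]; lra.
apply/eqP; rewrite -normr_le0.
have := bnd t tI; rewrite M00 mulr0 mul0r //.
Qed.


Lemma zero_all : forall s, a <= s <= b -> x s = 0 -> forall t, a <= t <= b -> x t = 0.
Proof. exact: (propagate loc_zero loc_nonzero). Qed.

End Uniq.

Lemma lin_bound (R : realType) n (F : 'rV[R]_n -> 'rV[R]_n) :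
  differentiable F 0 -> F 0 = 0 ->
  exists2 r : R, 0 < r & exists2 L : R, 0 < L &
  forall y, `|y| < r -> `|F y| <= L * `|y|.
Proof.
move=> dF F0.
have [k k0 Hk] := linear_lipschitz (diff_continuous dF).
have := diff_locally dF => /eqaddoP /(_ 1 ltr01).
move=> /nbhs_ballP [r /= r0 Hr].
exists r => //; exists (k + 1); first by rewrite addr_gt0.
move=> y yr.
have yb : ball (0 : 'rV[R]_n) r y by rewrite -ball_normE /ball_ /= sub0r normrN.
have := Hr y yb.
rewrite -[(_ - _) y]/(F (y + 0) - (F 0 + 'd F 0 y)) F0 addr0 add0r mul1r => h.
rewrite mulrDl mul1r.
have -> : F y = (F y - 'd F 0 y) + 'd F 0 y by rewrite subrK.
apply: le_trans (ler_normD _ _) _.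
by rewrite addrC lerD.
Qed.


Lemma gmul_comp (R : realType) n m l (N : 'I_l -> 'I_n)
  (g : 'I_l -> 'rV[R]_n -> 'rV[R]_m -> R) y u v p :
  injective N -> gmul N g y u v = 0 -> g p y u * v 0 p = 0.
Proof.
move=> Ninj /(congr1 (fun M : 'rV[R]_n => M 0 (N p))).
rewrite /gmul summxE (bigD1 p) //= big1 ?addr0.
  by rewrite !mxE !eqxx mulr1.
move=> q qp; rewrite !mxE eqxx /=.
have -> : (N p == N q) = false by apply/negbTE; apply: contra qp => /eqP/Ninj ->.
by rewrite mulr0.
Qed.

Lemma Fz0 (R : realType) n m l (N : 'I_l -> 'I_n) f
  (g : 'I_l -> 'rV[R]_n -> 'rV[R]_m -> R) k th z :
  f 0 0 = 0 -> (forall i, g i 0 0 = 0) -> (forall vt, k vt 0 = 0) ->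
  Fz N f g k th z 0 = 0.
Proof.
move=> f0 g0 k0; rewrite /Fz /gmul k0 f0 add0r.
by rewrite big1 // => p _; rewrite g0 mul0r scale0r.
Qed.

Section Tau.
Variable R : realType.
Variable tau : nat -> R.
Variable l : nat.
Hypothesis tmono : forall i, (i < l)%N -> tau i < tau i.+1.

Lemma tau_le i j : (i <= j)%N -> (j <= l)%N -> tau i <= tau j.
Proof.
move=> ij jl; elim: j ij jl => [|j IH] ij jl.
  by move: ij; rewrite leqn0 => /eqP ->.
move: ij; rewrite leq_eqVlt => /orP[/eqP -> //|ij].
apply: le_trans (IH ij (ltnW jl)) (ltW (tmono jl)).
Qed.

Lemma tau_lt i j : (i < j)%N -> (j <= l)%N -> tau i < tau j.
Proof.
move=> ij jl; apply: lt_le_trans (tmono (leq_trans ij jl)) _.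
exact: tau_le.
Qed.

Lemma tau_neq j t : (j < l)%N -> tau j < t < tau j.+1 ->
  forall i, (i <= l)%N -> t != tau i.
Proof.
move=> jl /andP[h1 h2] i il.
have [ij|ji] := leqP i j.
  by apply/eqP => ti; have := tau_le ij (ltnW jl); rewrite -ti leNgt h1.
by apply/eqP => ti; have := tau_le ji il; rewrite -ti leNgt h2.
Qed.

Lemma tau_cover : (0 < l)%N -> forall t, tau 0 <= t <= tau l ->
  exists2 j, (j < l)%N & tau j <= t <= tau j.+1.
Proof.
move=> l0.
suff H : forall m, (m < l)%N -> forall t, tau 0 <= t <= tau m.+1 ->
  exists2 j, (j < l)%N & tau j <= t <= tau j.+1.
  by move=> t ht; apply: (H l.-1); [rewrite ltn_predL|rewrite prednK].
elim=> [|m IH] ml t /andP[h1 h2]; first by exists 0%N => //; rewrite h1 h2.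
have [tm|tm] := leP t (tau m.+1).
  by apply: IH; [exact: ltnW|rewrite h1 tm].
by exists m.+1 => //; rewrite (ltW tm) h2.
Qed.

End Tau.

Unset Implicit Arguments.
Set Strict Implicit.

Theorem theorem4p1 (R : realType) (n m l : nat)
  (f : 'rV[R]_n -> 'rV[R]_m -> 'rV[R]_n)
  (g : 'I_l -> 'rV[R]_n -> 'rV[R]_m -> R)
  (N : 'I_l -> 'I_n)
  (k : 'rV[R]_l -> 'rV[R]_n -> 'rV[R]_m) :
  (0 < n)%N -> (0 < m)%N -> (0 < l)%N ->
  smooth (fun p : 'rV[R]_n * 'rV[R]_m => f p.1 p.2) ->
  f 0 0 = 0 ->
  (forall i, smooth (fun p : 'rV[R]_n * 'rV[R]_m => g i p.1 p.2)) ->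
  (forall i, g i 0 0 = 0) ->
  injective N ->
  smooth (fun p : 'rV[R]_l * 'rV[R]_n => k p.1 p.2) ->
  (forall vt, k vt 0 = 0) ->
  (forall (theta : 'rV[R]_l) (thh : nat -> 'rV[R]_l),
      cumI N f g k theta thh l = setT) ->
  forall (tau : nat -> R) (theta : 'rV[R]_l) (d : nat -> 'rV[R]_l)
         (x : R -> 'rV[R]_n),
  tau 0%N = 0 ->
  (forall i, (i < l)%N -> tau i < tau i.+1) ->
  (forall i, (i <= l)%N -> d i != 0) ->
  {within `[0, tau l], continuous x} ->
  (forall t, 0 <= t < tau l -> right_derivable x t) ->
  (forall t, 0 < t < tau l -> (forall i, (i <= l)%N -> t != tau i) ->
     derivable x t 1 /\ {for t, continuous (fun s => 'D_1 x s)}) ->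
  (forall i, (i < l)%N -> forall t, tau i <= t < tau i.+1 ->
     right_deriv x t (f (x t) (k (theta + d i) (x t))
                      + gmul N g (x t) (k (theta + d i) (x t)) theta)) ->
  (forall i j, (i < l)%N -> (j <= i)%N -> forall t, tau j <= t <= tau j.+1 ->
     gmul N g (x t) (k (theta + d j) (x t)) (d i.+1) = 0) ->
  forall t, 0 <= t <= tau l -> x t = 0.

Proof.
move=> n0 m0 l0 Sf f00 Sg g00 Ninj Sk k0 Hcum tau theta d x tau0 tmono dnz cx rdx dxint Hode Hg.
set Fj := fun j : nat => Fz N f g k theta (theta + d j).
have Icont : forall j, (j < l)%N -> {within `[tau j, tau j.+1], continuous x}.
  move=> j jl; apply: continuous_subspaceW cx => t; rewrite /= !in_itv /= => /andP[h1 h2].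
  rewrite (le_trans _ h1) ?(le_trans h2) //; first exact: (tau_le tmono).
  by rewrite -tau0; apply: (tau_le tmono) => //; exact: ltnW.
have Ider : forall j, (j < l)%N -> forall u, tau j < u < tau j.+1 ->
    derivable x u 1 /\ 'D_1 x u = Fj j (x u).
  move=> j jl u hu.
  have hu0 : 0 < u < tau l.
    move/andP: hu => [h1 h2]; apply/andP; split.
      apply: le_lt_trans h1; rewrite -tau0; apply: (tau_le tmono) => //; exact: ltnW.
    by apply: lt_le_trans h2 _; apply: (tau_le tmono).
  have [du _] := dxint u hu0 (tau_neq tmono jl hu).
  split => //; apply: deriv_right => //.
  apply: Hode => //; move/andP: hu => [h1 h2]; by rewrite (ltW h1) h2.
have Izero : forall j, (j < l)%N -> forall s, tau j <= s <= tau j.+1 -> x s = 0 ->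
    forall t, tau j <= t <= tau j.+1 -> x t = 0.
  move=> j jl; apply: (zero_all (F := Fj j)).
  - exact: Icont.
  - exact: Ider.
  - apply: lin_bound; first exact: diff_Fz.
    exact: Fz0.
move=> t ht; apply: contrapT => xt0.
have NZ : forall j, (j < l)%N -> forall s, tau j <= s <= tau j.+1 -> x s <> 0.
  move=> j0 jl0 s0 hs0 xs0.
  have Z0 := Izero j0 jl0 s0 hs0 xs0.
  have up : forall mm, (j0 + mm < l)%N -> forall t, tau (j0 + mm)%N <= t <= tau (j0 + mm)%N.+1 -> x t = 0.
    elim=> [|mm IH] h; first by move=> t0; rewrite addn0; exact: Z0.
    have h' : (j0 + mm < l)%N by lia.
    rewrite addnS; apply: (Izero _ _ (tau (j0 + mm)%N.+1)).
    - by rewrite -addnS.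
    - by rewrite lexx (ltW (tmono _ _)) //; rewrite -addnS.
    - by apply: (IH h'); rewrite lexx (ltW (tmono _ h')).
  have down : forall mm, (mm <= j0)%N -> forall t, tau (j0 - mm)%N <= t <= tau (j0 - mm)%N.+1 -> x t = 0.
    elim=> [|mm IH] h; first by rewrite subn0.
    have e : (j0 - mm = (j0 - mm.+1).+1)%N by lia.
    have h1 : (j0 - mm.+1 < l)%N by lia.
    apply: (Izero _ h1 (tau (j0 - mm.+1)%N.+1)).
    - by rewrite lexx (ltW (tmono _ h1)).
    - by rewrite -e; apply: (IH (ltnW h)); rewrite lexx (ltW (tmono _ _)) //; lia.
  have [j jl htj] : exists2 j, (j < l)%N & tau j <= t <= tau j.+1.
    have := @tau_cover R tau l l0 t; rewrite tau0; move=> /(_ ht) [j jl htj]; exists j => //.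
  apply: xt0; have [jj|jj] := leqP j0 j.
    have e : (j0 + (j - j0) = j)%N by lia.
    have := up (j - j0)%N; rewrite e => H; exact: (H jl t htj).
  have e : (j0 - (j0 - j) = j)%N by lia.
  have hh : (j0 - j <= j0)%N by lia.
  have := down (j0 - j)%N hh; rewrite e => H; exact: (H t htj).
set thh := fun s : nat => theta + d s.
have C : forall s, (s <= l)%N -> forall p, cumI N f g k theta thh s p ->
    forall i, (s <= i <= l)%N -> d i 0 p = 0.
  elim=> [|s IH] sl p /=; first by [].
  have sl' : (s <= l)%N by exact: ltnW.
  move=> [Hp|Hp] i /andP[si il].
    by apply: (IH sl' p Hp); rewrite il andbT; exact: ltnW.
  have zE : zrepl (cumI N f g k theta thh s) (thh s) theta = theta + d s.
    apply/rowP => q; rewrite !mxE; case: asboolP => // hq.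
    by rewrite (IH sl' q hq s) ?addr0 // leqnn sl'.
  move: Hp; rewrite /= zE => Hp.
  apply: contrapT => dip.
  set h := fun y => g p y (k (theta + d s) y).
  have hz : forall u, tau s <= u <= tau s.+1 -> h (x u) = 0.
    move=> u hu.
    have i0 : (0 < i)%N by apply: leq_trans si.
    have hi : (i.-1 < l)%N by lia.
    have hsi : (s <= i.-1)%N by lia.
    have := Hg i.-1 s hi hsi u hu; rewrite prednK // => /(gmul_comp p Ninj).
    by move/eqP; rewrite mulf_eq0 (negbTE (introN eqP dip)) orbF => /eqP.
  have lz : forall jj u, tau s < u < tau s.+1 -> lieN (Fj s) jj h (x u) = 0.
    elim=> [|jj IHj] u hu; first by apply: hz; move/andP: hu => [? ?]; rewrite !ltW.
    rewrite /lieN iterS -/(lieN (Fj s) jj h).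
    apply: (vanish_step (a := tau s) (b := tau s.+1)).
    - move=> y; exact: (Sm_diff (Sm_lieN N Sf Sg Sk theta (theta + d s) jj (Sm_h Sg Sk (theta + d s) p)) y).
    - by move=> v; rewrite in_itv /=; apply: Ider.
    - by move=> v; rewrite in_itv /=; apply: IHj.
    - by rewrite in_itv.
  have hts := tmono s sl.
  set u0 := (tau s + tau s.+1) / 2.
  have hu0 : tau s < u0 < tau s.+1 by apply/andP; split; rewrite /u0; lra.
  apply: (NZ s sl u0); first by move/andP: hu0 => [? ?]; rewrite !ltW.
  apply: Hp; first by apply: hz; move/andP: hu0 => [? ?]; rewrite !ltW.
  by move=> jj _; apply: lz.
have := C l (leqnn l); rewrite Hcum => Cl.
have : d l == 0.
  by apply/eqP/rowP => p; rewrite mxE; apply: Cl => //; rewrite leqnn.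
by rewrite (negbTE (dnz l (leqnn l))).
Qed.
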